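(* Let $\varepsilon\in(0,1/2)$ and let $V_N=\mathbb Z/p_N\mathbb Z$ with $p_N\ge3$. The family $\mathcal Q(\varepsilon)=\{Q_\delta:\delta\in[-\varepsilon,\varepsilon]\}$ is $\frac{1+2\varepsilon}{1-2\varepsilon}$-stable with respect to any probability measure $\mu_0\in\mathcal S_N(\varepsilon)$.
   Context: $Q$ is the simple random walk kernel on $V_N=\mathbb Z/p_N\mathbb Z$: $Q(x,y)=1/2$ if $y=x\pm1$ and $0$ otherwise. For $\delta\in(-1/2,1/2)$, $Q_\delta=Q+\Delta_\delta$ where $\Delta_\delta(0,1)=\delta$, $\Delta_\delta(0,-1)=-\delta$ and $\Delta_\delta(x,y)=0$ otherwise. $\mathcal S_N(\varepsilon)$ is the set of probability measures $\mu$ on $V_N$ of the form $\mu(x)=1/p_N+a_{\mu,x}$ with $a_{\mu,x}=-a_{\mu,-x}$ and $|a_{\mu,x}|\le2\varepsilon/p_N$ for all $x\in V_N$. A family $\mathcal Q$ of Markov kernels is $c$-stable with respect to $\mu_0$ if for every sequence $(K_i)_{i\ge1}$ with all $K_i\in\mathcal Q$, setting $\mu_n=\mu_0K_1\cdots K_n$, one has $c^{-1}\le\mu_n(x)/\mu_0(x)\le c$ for all $n\ge0$, $x$. *)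

(* Defs.v *)
(* V_N = 'Z_p (ring Z/pZ, p >= 3 assumed in the theorem). *)
From HB Require Import structures.
From mathcomp Require Import all_boot all_order all_algebra.
Unset Printing Implicit Defensive.
Import Order.TTheory GRing.Theory Num.Theory.
Local Open Scope ring_scope.

Definition kernel (R : realFieldType) (p : nat) := 'Z_p -> 'Z_p -> R.
Definition meas (R : realFieldType) (p : nat) := 'Z_p -> R.

Definition Qsrw (R : realFieldType) (p : nat) : kernel R p :=
  fun x y => if (y == x + 1) || (y == x - 1) then 2^-1 else 0.

Definition Delta (R : realFieldType) (p : nat) (d : R) : kernel R p :=
  fun x y => if x == 0 then (if y == 1 then d else if y == -1 then - d else 0)
             else 0.

Definition Qdelta (R : realFieldType) (p : nat) (d : R) : kernel R p :=
  fun x y => Qsrw R p x y + Delta R p d x y.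

Definition Qfamily (R : realFieldType) (p : nat) (eps : R) (K : kernel R p) : Prop :=
  exists d : R, - eps <= d <= eps /\ K = Qdelta R p d.

Definition is_prob (R : realFieldType) (p : nat) (mu : meas R p) : Prop :=
  (forall x, 0 <= mu x) /\ \sum_(x : 'Z_p) mu x = 1.

Definition SN (R : realFieldType) (p : nat) (eps : R) (mu : meas R p) : Prop :=
  is_prob R p mu /\
  exists a : 'Z_p -> R,
    (forall x, mu x = (p%:R)^-1 + a x) /\
    (forall x, a x = - a (- x)) /\
    (forall x, `|a x| <= 2 * eps / p%:R).

Definition act (R : realFieldType) (p : nat) (mu : meas R p) (K : kernel R p) : meas R p :=
  fun y => \sum_(x : 'Z_p) mu x * K x y.

(* mu_n = mu_0 K_1 ... K_n, kernels indexed from 1 *)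
Fixpoint mu_n (R : realFieldType) (p : nat) (mu0 : meas R p) (Ks : nat -> kernel R p)
  (n : nat) : meas R p :=
  match n with
  | 0 => mu0
  | n'.+1 => act R p (mu_n R p mu0 Ks n') (Ks n)
  end.

Definition stable (R : realFieldType) (p : nat) (c : R)
  (fam : kernel R p -> Prop) (mu0 : meas R p) : Prop :=
  forall Ks : nat -> kernel R p, (forall i, (1 <= i)%N -> fam (Ks i)) ->
  forall (n : nat) (x : 'Z_p),
    c^-1 <= mu_n R p mu0 Ks n x / mu0 x <= c.

(* Main.v *)
Require Import Defs.
From mathcomp Require Import all_boot all_order all_algebra.
From mathcomp Require Import ring lra.
Import Order.TTheory GRing.Theory Num.Theory.
Local Open Scope ring_scope.

Lemma one_neq_mone (p : nat) : (3 <= p)%N -> (1 : 'Z_p) != -1.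
Proof.
move=> hp; rewrite -addr_eq0; case: p hp => [|[|[|p']]] // _.
Qed.

Lemma sum_pick (R : realFieldType) (T : finType) (f : T -> R) j :
  \sum_(x : T) (if x == j then f x else 0) = f j.
Proof. by rewrite -big_mkcond big_pred1_eq. Qed.

Lemma Qsrw_split (R : realFieldType) p (x y : 'Z_p) : (3 <= p)%N ->
  Qsrw R p x y = (if x == y - 1 then 2^-1 else 0) + (if x == y + 1 then 2^-1 else 0).
Proof.
move=> hp; rewrite /Qsrw.
have e1 : (y == x + 1) = (x == y - 1).
  by apply/eqP/eqP => [->|->]; rewrite ?addrK ?subrK.
have e2 : (y == x - 1) = (x == y + 1).
  by apply/eqP/eqP => [->|->]; rewrite ?subrK ?addrK.
rewrite e1 e2.
case: eqP => [h1|_]; case: eqP => [h2|_] //=; rewrite ?addr0 ?add0r //.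
exfalso; move: (one_neq_mone _ hp).
have : y - 1 = y + 1 by rewrite -h1 -h2.
by move/addrI => ->; rewrite eqxx.
Qed.

Definition Dd (R : realFieldType) p (d : R) (y : 'Z_p) : R :=
  if y == 1 then d else if y == -1 then - d else 0.

Lemma act_Q (R : realFieldType) p (d : R) (mu : meas R p) y : (3 <= p)%N ->
  act R p mu (Qdelta R p d) y = (mu (y - 1) + mu (y + 1)) / 2 + mu 0 * Dd R p d y.
Proof.
move=> hp; rewrite /act /Qdelta.
under eq_bigr do rewrite mulrDr Qsrw_split // mulrDr.
rewrite !big_split /=.
have h1 : forall j, \sum_(i : 'Z_p) mu i * (if i == j then 2^-1 else 0) = mu j / 2.
  move=> j; rewrite -[RHS](sum_pick _ _ (fun x => mu x / 2) j).
  by apply: eq_bigr => i _; case: eqP; rewrite ?mulr0.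
rewrite !h1 mulrDl.
congr (_ + _).
rewrite -[RHS](sum_pick _ _ (fun x => mu x * Dd R p d y) 0).
apply: eq_bigr => i _; rewrite /Delta /Dd; case: eqP => [->|]; rewrite ?mulr0 //.
Qed.

Definition Inv (R : realFieldType) p (eps : R) (mu : meas R p) : Prop :=
  (forall x, mu x - p%:R^-1 = - (mu (- x) - p%:R^-1)) /\
  (forall x, `|mu x - p%:R^-1| <= 2 * eps / p%:R).

Lemma Inv_step (R : realFieldType) p (eps d : R) (mu : meas R p) :
  (3 <= p)%N -> - eps <= d <= eps -> Inv R p eps mu ->
  Inv R p eps (act R p mu (Qdelta R p d)).
Proof.
move=> hp /andP [hd1 hd2] [hodd hb].
set q := p%:R^-1 : R.
have qpos : 0 < q by rewrite invr_gt0 ltr0n; apply: leq_trans hp.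
have b0 : mu 0 = q.
  have := hodd 0; rewrite oppr0 -/q => h; lra.
have hone := one_neq_mone _ hp.
have hb' : forall x, - (2 * eps * q) <= mu x - q <= 2 * eps * q.
  by move=> x; rewrite -ler_norml; exact: hb.
have qd1 : q * d <= q * eps by rewrite ler_wpM2l // ltW.
have qd2 : q * (- eps) <= q * d by rewrite ler_wpM2l // ltW.
rewrite mulrN in qd2.
split=> x; rewrite !act_Q // b0 -/q.
- have o1 := hodd (x - 1); have o2 := hodd (x + 1).
  rewrite -/q (_ : - (x - 1) = - x + 1) in o1; last by rewrite opprB addrC.
  rewrite -/q (_ : - (x + 1) = - x - 1) in o2; last by rewrite opprD.
  rewrite /Dd.
  have e1 : (- x == 1) = (x == -1) by rewrite -eqr_opp opprK.
  have e2 : (- x == -1) = (x == 1) by rewrite eqr_opp.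
  rewrite e1 e2.
  case: (eqVneq x 1) => [h1|n1].
    have c2 : (x == -1) = false by rewrite h1 (negPf hone).
    rewrite /= ?c2; lra.
  case: (eqVneq x (-1)) => [h2|n2]; lra.
- rewrite /Dd ler_norml.
  case: (eqVneq x 1) => [h1|n1].
    have c2 : (x == -1) = false by rewrite h1 (negPf hone).
    have m0 : mu (x - 1) = q by rewrite h1 subrr.
    rewrite /= ?c2 m0.
    have := hb' (x + 1); lra.
  case: (eqVneq x (-1)) => [h2|n2].
    have m0 : mu (x + 1) = q by rewrite h2 addNr.
    rewrite m0.
    have := hb' (x - 1); lra.
  have := hb' (x - 1); have := hb' (x + 1); lra.
Qed.

Theorem claim3p4 (R : realFieldType) (p : nat) (eps : R) :
  (3 <= p)%N -> 0 < eps -> eps < 2^-1 ->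
  forall mu0 : meas R p, SN R p eps mu0 ->
  stable R p ((1 + 2 * eps) / (1 - 2 * eps)) (Qfamily R p eps) mu0.
Proof.
move=> hp he1 he2 mu0 [_ [a [ha [hodd hb]]]] Ks hKs.
have I0 : Inv R p eps mu0.
  split=> x; rewrite !ha addrC addKr // addrC addKr; exact: hodd.
have In : forall n, Inv R p eps (mu_n R p mu0 Ks n).
  elim=> [//|n IH] /=.
  have [d [hd ->]] := hKs n.+1 isT.
  exact: Inv_step.
move=> n x.
set q := p%:R^-1 : R.
have qpos : 0 < q by rewrite invr_gt0 ltr0n; apply: leq_trans hp.
have hbd : forall mu : meas R p, Inv R p eps mu ->
   q - 2 * eps * q <= mu x <= q + 2 * eps * q.
  move=> mu [_ hb']; have := hb' x; rewrite ler_norml -/q.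
  move=> /andP [h1 h2]; apply/andP; split; lra.
have /andP [m1 m2] := hbd _ (In n).
have /andP [u1 u2] := hbd _ I0.
have upos : 0 < mu0 x.
  have : 0 < q - 2 * eps * q.
    have -> : q - 2 * eps * q = (1 - 2 * eps) * q by ring.
    apply: mulr_gt0 => //; lra.
  lra.
have h1 : 0 < 1 - 2 * eps by lra.
have h2 : 0 < 1 + 2 * eps by lra.
rewrite invf_div; apply/andP; split.
- rewrite ler_pdivlMr // mulrAC ler_pdivrMr //. nra.
- rewrite ler_pdivrMr // mulrAC ler_pdivlMr //. nra.
Qed.
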